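(* Setting. Fix an integer $v\ge1$ and numbers $\mathbf p_{kj}\in(0,1)$, $k\in\{0,1,2,\dots\}$, $1\le j\le 2^{v-1}$, where $j$ numbers the binary words of length $v$ ending in $1$. Assume there are constants $1>\delta_1>\delta_2>0$ with $\delta_2\le\mathbf p_{kj}\le\delta_1$ for all $k,j$. Let the initial configuration $r(0)$ contain at least one $1$. Let $\tau_k$, $k\ge1$, be the regeneration times described in the context. Conclusion. For all $k,n\in\mathbb N$, $$\mathbf P(\tau_k\ge n)\le Ce^{-\rho n},\qquad C:=\frac{1}{1-(1-\delta_1)^{v-1}\delta_2},\quad \rho:=\frac1v\ln C.$$
   Context: Chain. The chain $r(n)=(r_i(n))_{i\le n}$ starts from the configuration $r(0)=(r_i(0))_{i\le0}\in\{0,1\}^{\{\dots,-1,0\}}$. Given $r(n)$, let $m_n:=\sup\{i\le n:r_i(n)=1\}$. Then $r(n+1)$ extends $r(n)$ by one symbol, which is $1$ with probability $\mathbf p_{k_nj_n}$ and $0$ otherwise. Here $k_n=n-m_n$ and $j_n$ is the number of the word $(r_{m_n-v+1}(n),\dots,r_{m_n}(n))$. Auxiliary Markov chain. $Y(n):=(n-m_n,(r_{m_n-v+1}(n),\dots,r_{m_n}(n)))$, and $y_0:=(0,(0,\dots,0,1))$. Regeneration times. $\tau_1:=\min\{n>0:Y(n)=y_0\}$ and $\tau_k:=\min\{n>\tau_1+\dots+\tau_{k-1}:Y(n)=y_0\}-(\tau_1+\dots+\tau_{k-1})$ for $k\ge2$. *)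

(* Defs.v *)
From HB Require Import structures.
From mathcomp Require Import all_boot all_order all_algebra.
From mathcomp Require Import all_classical all_reals.
From mathcomp Require Import ereal measure probability.
From mathcomp Require Import sequences.
From mathcomp.analysis Require Import exp.
Set Implicit Arguments. Unset Strict Implicit. Unset Printing Implicit Defensive.
Import Order.TTheory GRing.Theory Num.Theory.

(* Configuration r(n) = (r_i(n))_{i <= n}, encoded by
   - r0 : nat -> bool,  r0 i = r_{-i}(0)   (the initial configuration),
   - x  : nat -> bool,  x t = the symbol appended at time t (t >= 1).
   Since r(n+1) extends r(n), r_i(n) = sym r0 x i for all i <= n. *)
Definition sym (r0 x : nat -> bool) (i : int) : bool :=
  match i with
  | Posz 0 => r0 0%N
  | Posz (S k) => x k.+1
  | Negz k => r0 k.+1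
  end.

(* k_n = n - m_n, where m_n = sup{i <= n : r_i(n) = 1}
   (0 if there is no 1, which cannot happen when r0 contains a 1). *)
Definition gap (r0 x : nat -> bool) (n : nat) : nat :=
  match boolp.pselect (exists d : nat, sym r0 x (n%:Z - d%:Z)%R) with
  | left h => ex_minn h
  | right _ => 0%N
  end.

Definition lastone (r0 x : nat -> bool) (n : nat) : int :=
  (n%:Z - (gap r0 x n)%:Z)%R.

Definition lastword (v : nat) (r0 x : nat -> bool) (n : nat) : seq bool :=
  [seq sym r0 x (lastone r0 x n - (v%:Z - 1) + i%:Z)%R | i <- iota 0 v].

Definition Y (v : nat) (r0 x : nat -> bool) (n : nat) : nat * seq bool :=
  (gap r0 x n, lastword v r0 x n).

Definition y0 (v : nat) : nat * seq bool := (0%N, rcons (nseq v.-1 false) true).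

Definition visit (v : nat) (r0 x : nat -> bool) (n : nat) : Prop :=
  (0 < n)%N /\ Y v r0 x n = y0 v.

(* Tsum k = tau_1 + ... + tau_k (the k-th visit time to y_0 after time 0);
   None means +infinity (min of the empty set). Tsum 0 = 0. *)
Fixpoint Tsum (v : nat) (r0 x : nat -> bool) (k : nat) : option nat :=
  match k with
  | 0 => Some 0%N
  | S k' =>
    match Tsum v r0 x k' with
    | None => None
    | Some t =>
      match boolp.pselect (exists s : nat, (t < s)%N /\ visit v r0 x s) with
      | left h =>
          let P := fun s : nat => `[< (t < s)%N /\ visit v r0 x s >] in
          Some (@ex_minn P (let: ex_intro s hs := h in
                             ex_intro _ s (introT (asboolP _) hs)))
      | right _ => None
      end
    end
  end.

Definition tau (v : nat) (r0 x : nat -> bool) (k : nat) : option nat :=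
  match Tsum v r0 x k.-1, Tsum v r0 x k with
  | Some a, Some b => Some (b - a)%N
  | _, _ => None
  end.

Definition opt_ge (t : option nat) (n : nat) : Prop :=
  match t with None => True | Some s => (n <= s)%N end.

Definition cyl (T : Type) (X : nat -> T -> bool) (b : nat -> bool) (n : nat) : set T :=
  [set w | forall t, (0 < t <= n)%N -> X t w = b t].

Definition tau_ge_event (T : Type) (v : nat) (r0 : nat -> bool)
  (X : nat -> T -> bool) (k n : nat) : set T :=
  [set w | opt_ge (tau v r0 (fun t => X t w) k) n].

Definition step_prob (R : ringType) (v : nat) (p : nat -> seq bool -> R)
  (r0 b : nat -> bool) (n : nat) : R :=
  if b n.+1 then p (gap r0 b n) (lastword v r0 b n)
  else (1 - p (gap r0 b n) (lastword v r0 b n))%R.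

(* Main.v *)
Set Warnings "-all".
Require Import Defs.
From HB Require Import structures.
From mathcomp Require Import all_boot all_order all_algebra.
From mathcomp Require Import all_classical all_reals.
From mathcomp Require Import ereal measure probability.
From mathcomp Require Import sequences.
From mathcomp.analysis Require Import exp.
From mathcomp Require Import zify ring lra.
Import Order.TTheory GRing.Theory Num.Theory.
From mathcomp Require Import normedtype.
Import numFieldNormedType.Exports.
Set Implicit Arguments. Unset Strict Implicit. Unset Printing Implicit Defensive.
Local Open Scope classical_set_scope.
Local Open Scope ring_scope.

Lemma sym_neg (r0 x : nat -> bool) (i : nat) : sym r0 x (- i%:Z) = r0 i.
Proof. by case: i => [|i] //; rewrite -NegzE. Qed.

Lemma sym_pos (r0 x : nat -> bool) (t : nat) : sym r0 x (Posz t.+1) = x t.+1.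
Proof. by []. Qed.

Definition gapf (f : nat -> bool) : nat :=
  match boolp.pselect (exists d : nat, f d) with
  | left h => ex_minn h
  | right _ => 0%N
  end.

Lemma gap_gapf (r0 x : nat -> bool) n : gap r0 x n = gapf (fun d : nat => sym r0 x (n%:Z - d%:Z)).
Proof. by []. Qed.

Lemma gapf_ext f g : f =1 g -> gapf f = gapf g.
Proof. by move=> /boolp.funext ->. Qed.

Lemma gapf_spec (f : nat -> bool) : (exists d, f d) -> f (gapf f) /\ forall d, f d -> (gapf f <= d)%N.
Proof.
move=> ex; rewrite /gapf; case: boolp.pselect => [h|//].
by case: ex_minnP.
Qed.

Lemma gap_spec (r0 x : nat -> bool) n : (exists i, r0 i) ->
  sym r0 x (lastone r0 x n) /\ forall d : nat, sym r0 x (n%:Z - d%:Z) -> (gap r0 x n <= d)%N.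
Proof.
move=> [i ri]; rewrite /lastone gap_gapf; apply: gapf_spec.
exists (n + i)%N; have -> : (n%:Z - (n + i)%N%:Z) = - i%:Z by lia.
by rewrite sym_neg.
Qed.

Lemma size_lastword v (r0 x : nat -> bool) n : size (lastword v r0 x n) = v.
Proof. by rewrite /lastword size_map size_iota. Qed.

Lemma iotaSr m : iota 0 m.+1 = rcons (iota 0 m) m.
Proof. by rewrite -cats1 -addn1 iotaD. Qed.

Lemma last_lastword v (r0 x : nat -> bool) n : (1 <= v)%N -> (exists i, r0 i) ->
  last false (lastword v r0 x n) = true.
Proof.
case: v => [//|v] _ h; rewrite /lastword iotaSr map_rcons last_rcons.
have -> : (lastone r0 x n - (v.+1%:Z - 1) + v%:Z) = lastone r0 x n by lia.
by case: (@gap_spec r0 x n h).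
Qed.

Definition agree (x y : nat -> bool) (n : nat) := forall t, (0 < t <= n)%N -> x t = y t.

Lemma agree_sym x y n : agree x y n -> agree y x n.
Proof. by move=> h t /h ->. Qed.

Lemma agree_le x y n m : (m <= n)%N -> agree x y n -> agree x y m.
Proof. move=> le h t /andP[t0 tm]; apply: h; lia. Qed.

Lemma sym_agree (r0 x y : nat -> bool) n (i : int) : agree x y n -> (i <= n%:Z) ->
  sym r0 x i = sym r0 y i.
Proof.
move=> h; case: i => [[|k]|k] //= hk; apply: h; lia.
Qed.

Lemma gap_agree (r0 x y : nat -> bool) n : agree x y n -> gap r0 x n = gap r0 y n.
Proof.
move=> h; rewrite !gap_gapf; apply: gapf_ext => d /=.
apply: sym_agree h _; lia.
Qed.

Lemma lastword_agree v (r0 x y : nat -> bool) n : agree x y n ->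
  lastword v r0 x n = lastword v r0 y n.
Proof.
move=> h; rewrite /lastword /lastone (gap_agree r0 h).
apply/eq_in_map => i; rewrite mem_iota => /andP[_ hi].
apply: sym_agree h _; lia.
Qed.

Lemma Y_agree v (r0 x y : nat -> bool) n : agree x y n -> Y v r0 x n = Y v r0 y n.
Proof. by move=> h; rewrite /Y (gap_agree r0 h) (lastword_agree v r0 h). Qed.

Lemma visit_agree v (r0 x y : nat -> bool) n : agree x y n -> visit v r0 x n -> visit v r0 y n.
Proof. by move=> h [n0 hY]; split => //; rewrite -(Y_agree v r0 h). Qed.

Lemma visit_block v (r0 x : nat -> bool) a : (1 <= v)%N ->
  x (a + v)%N = true -> (forall t, (a < t < a + v)%N -> x t = false) ->
  visit v r0 x (a + v).
Proof.
case: v => [//|v] _ hv hf; split; first lia.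
have g0 : gap r0 x (a + v.+1) = 0%N.
  rewrite gap_gapf; apply/eqP; rewrite -leqn0.
  apply: (proj2 (gapf_spec _)); last by rewrite subr0 addnS sym_pos -addnS.
  by exists 0%N; rewrite subr0 addnS sym_pos -addnS.
rewrite /Y /y0 g0; congr pair; rewrite /lastword /lastone g0 iotaSr map_rcons /=.
have -> : ((a + v.+1)%N%:Z - 0%N%:Z - (v.+1%:Z - 1) + v%:Z) = Posz (a + v).+1 by lia.
rewrite sym_pos -addnS hv; congr rcons.
apply: (@eq_from_nth _ false); first by rewrite size_map size_iota size_nseq.
move=> i; rewrite size_map size_iota => hi.
rewrite (nth_map 0%N) ?size_iota // nth_iota // nth_nseq hi add0n.
have -> : ((a + v.+1)%N%:Z - 0%N%:Z - (v.+1%:Z - 1) + i%:Z) = Posz (a + i).+1 by lia.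
rewrite sym_pos; apply: hf; lia.
Qed.

Definition nextvisit v (r0 x : nat -> bool) (t : nat) : option nat :=
  match boolp.pselect (exists s : nat, (t < s)%N /\ visit v r0 x s) with
  | left h =>
      let P := fun s : nat => `[< (t < s)%N /\ visit v r0 x s >] in
      Some (@ex_minn P (let: ex_intro s hs := h in
                         ex_intro _ s (introT (asboolP _) hs)))
  | right _ => None
  end.

Lemma Tsum_S v (r0 x : nat -> bool) k :
  Tsum v r0 x k.+1 = obind (nextvisit v r0 x) (Tsum v r0 x k).
Proof. by []. Qed.

Lemma nextvisit_Some v (r0 x : nat -> bool) t s : nextvisit v r0 x t = Some s ->
  [/\ (t < s)%N, visit v r0 x s & forall s', (t < s')%N -> visit v r0 x s' -> (s <= s')%N].
Proof.
rewrite /nextvisit; case: boolp.pselect => [h|//].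
case: ex_minnP => m /asboolP [h1 h2] hmin [<-]; split => // s' h1' h2'.
by apply: hmin; apply/asboolP.
Qed.

Lemma nextvisit_None v (r0 x : nat -> bool) t : nextvisit v r0 x t = None ->
  forall s, (t < s)%N -> ~ visit v r0 x s.
Proof.
rewrite /nextvisit; case: boolp.pselect => [//|h] _ s ts vs.
by apply: h; exists s.
Qed.

Lemma nextvisit_eq v (r0 x : nat -> bool) t s : (t < s)%N -> visit v r0 x s ->
  (forall s', (t < s')%N -> visit v r0 x s' -> (s <= s')%N) ->
  nextvisit v r0 x t = Some s.
Proof.
move=> ts vs hmin; case E: nextvisit => [s'|].
  have [h1 h2 h3] := nextvisit_Some E.
  by congr Some; apply/eqP; rewrite eqn_leq h3 // hmin.
by have := nextvisit_None E ts.
Qed.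

Lemma Tsum_agree v (r0 x y : nat -> bool) k a :
  Tsum v r0 x k = Some a -> agree x y a -> Tsum v r0 y k = Some a.
Proof.
elim: k a => [|k IH] a; first by [].
rewrite !Tsum_S; case E: (Tsum v r0 x k) => [a'|] //= hn h.
have [h1 h2 h3] := nextvisit_Some hn.
rewrite (IH a' E (agree_le (ltnW h1) h)) /=.
apply: nextvisit_eq => //; first exact: visit_agree h h2.
move=> s' hs' vs'; case: (leqP s' a) => hsa; last exact: ltnW.
apply: h3 => //; apply: (visit_agree (agree_sym (agree_le hsa h))) vs'.
Qed.

Definition NV v (r0 x : nat -> bool) (a c : nat) : Prop :=
  forall s, (a < s)%N -> (s <= c)%N -> ~ visit v r0 x s.

Lemma tau_char v (r0 x : nat -> bool) j n :
  opt_ge (tau v r0 x j.+1) n <->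
  Tsum v r0 x j = None \/ exists a, Tsum v r0 x j = Some a /\ NV v r0 x a (a + n.-1).
Proof.
rewrite /tau Tsum_S; change (j.+1.-1) with j; case E: (Tsum v r0 x j) => [a|] /=; last by split => // _; left.
split.
  move=> h; right; exists a; split => //.
  case hn: (nextvisit v r0 x a) => [b|] /=; rewrite hn in h.
    have [h1 h2 h3] := nextvisit_Some hn.
    move=> s hs hsc vs; have := h3 s hs vs; rewrite /= in h; lia.
  by move=> s hs _; apply: (nextvisit_None hn).
case=> [//|[a' [[<-] hNV]]].
case hn: (nextvisit v r0 x a) => [b|] //=.
have [h1 h2 h3] := nextvisit_Some hn.
case: (leqP n (b - a)) => // hlt; exfalso; apply: (hNV b) => //; lia.
Qed.

Definition path T (X : nat -> T -> bool) (w : T) : nat -> bool := fun t => X t w.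
Definition evt T (X : nat -> T -> bool) (Q : (nat -> bool) -> Prop) : set T :=
  [set w | Q (path X w)].
Definition Det N (Q : (nat -> bool) -> Prop) := forall x y, agree x y N -> Q x -> Q y.
Definition upd (x : nat -> bool) m (b : bool) := fun t => if t == m then b else x t.

Lemma upd_id (x : nat -> bool) m b : x m = b -> upd x m b = x.
Proof. by move=> h; apply: boolp.funext => t; rewrite /upd; case: eqP => // ->. Qed.

Lemma Det_upd N Q b : Det N.+1 Q -> Det N (fun x => Q (upd x N.+1 b)).
Proof.
move=> hD x y h; apply: hD => t /andP[t0 tN]; rewrite /upd; case: eqP => // /eqP tne.
apply: h; lia.
Qed.

Lemma evt_meas d (T : measurableType d) (X : nat -> T -> bool) N Q :
  (forall t, (0 < t)%N -> measurable [set w | X t w]) -> Det N Q -> measurable (evt X Q).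
Proof.
move=> hX; elim: N Q => [|N IH] Q hD.
  case: (boolp.pselect (exists x, Q x)) => [[x0 qx0]|nq].
    have -> : evt X Q = setT; last exact: measurableT.
    apply/seteqP; split => w //= _; apply: (hD x0) => // t /andP[h1 h2]; exfalso; lia.
  have -> : evt X Q = set0; last exact: measurable0.
  by apply/seteqP; split => w //= qw; apply: nq; exists (path X w).
have -> : evt X Q = ([set w | X N.+1 w] `&` evt X (fun x => Q (upd x N.+1 true))) `|`
    (~` [set w | X N.+1 w] `&` evt X (fun x => Q (upd x N.+1 false))).
  apply/seteqP; split => w /=.
    case hw: (X N.+1 w) => q; [left|right]; split.
    - by [].
    - by rewrite /evt /= upd_id.
    - by move=> /= h; rewrite h in hw.
    - by rewrite /evt /= upd_id.
  case=> -[hw q]; move: q; rewrite /evt /= upd_id //.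
  by rewrite /path; apply/negP.
apply: measurableU; apply: measurableI.
- exact: hX.
- by apply: IH; apply: Det_upd.
- by apply: measurableC; exact: hX.
- by apply: IH; apply: Det_upd.
Qed.

Lemma cyl_evt T (X : nat -> T -> bool) b n : cyl X b n = evt X (fun x => agree x b n).
Proof. by []. Qed.

Lemma Det_cyl b n : Det n (fun x => agree x b n).
Proof. by move=> x y h hx t ht; rewrite -(h t ht) hx. Qed.

Lemma cyl_meas d (T : measurableType d) (X : nat -> T -> bool) b n :
  (forall t, (0 < t)%N -> measurable [set w | X t w]) -> measurable (cyl X b n).
Proof. by move=> hX; rewrite cyl_evt; apply: (evt_meas hX); apply: Det_cyl. Qed.

Lemma cyl_capT T (X : nat -> T -> bool) N Q b : Det N Q -> Q b ->
  cyl X b N `&` evt X Q = cyl X b N.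
Proof.
move=> hD qb; apply/seteqP; split => w; first by case.
by move=> hw; split => //; apply: (hD b) => // t ht; rewrite /path (hw t ht).
Qed.

Lemma cyl_cap0 T (X : nat -> T -> bool) N Q b : Det N Q -> ~ Q b ->
  cyl X b N `&` evt X Q = set0.
Proof.
move=> hD qb; apply/seteqP; split => w //= [hw qw]; apply: qb.
by apply: (hD (path X w)) => // t ht; rewrite /path (hw t ht).
Qed.

Lemma cyl_ext T (X : nat -> T -> bool) b b' n : agree b b' n -> cyl X b n = cyl X b' n.
Proof.
move=> h; apply/seteqP; split => w /= hw t ht; first by rewrite hw // h.
by rewrite hw // h.
Qed.

Lemma cyl0 T (X : nat -> T -> bool) b : cyl X b 0 = setT.
Proof. by apply/seteqP; split => w //= _ t /andP[h1 h2]; exfalso; lia. Qed.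

Definition pr d (T : measurableType d) (R : realType) (P : probability T R) (A : set T) : R :=
  fine (P A).

Lemma prE d (T : measurableType d) (R : realType) (P : probability T R) A :
  measurable A -> P A = (pr P A)%:E.
Proof. by move=> mA; rewrite /pr fineK // fin_num_measure. Qed.

Lemma pr_ge0 d (T : measurableType d) (R : realType) (P : probability T R) A :
  0 <= pr P A.
Proof. by rewrite /pr fine_ge0. Qed.

Lemma pr_le1 d (T : measurableType d) (R : realType) (P : probability T R) A :
  measurable A -> pr P A <= 1.
Proof. by move=> mA; have := probability_le1 P mA; rewrite (prE P mA) lee_fin. Qed.

Lemma pr_le d (T : measurableType d) (R : realType) (P : probability T R) A B :
  measurable A -> measurable B -> A `<=` B -> pr P A <= pr P B.
Proof.
move=> mA mB AB; have h : (P A <= P B)%E by apply: le_measure => //; rewrite inE.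
by move: h; rewrite (prE P mA) (prE P mB) lee_fin.
Qed.

Lemma pr0 d (T : measurableType d) (R : realType) (P : probability T R) : pr P set0 = 0.
Proof. by rewrite /pr measure0. Qed.

Lemma prT d (T : measurableType d) (R : realType) (P : probability T R) : pr P setT = 1.
Proof. by rewrite /pr probability_setT. Qed.

Lemma prU d (T : measurableType d) (R : realType) (P : probability T R) A B :
  measurable A -> measurable B -> A `&` B = set0 -> pr P (A `|` B) = pr P A + pr P B.
Proof.
move=> mA mB AB; have h := measureU P mA mB AB.
apply: EFin_inj; rewrite EFinD -(@prE _ _ _ P A mA) -(@prE _ _ _ P B mB) -(@prE _ _ _ P (A `|` B)); last exact: measurableU.
exact: h.
Qed.

Lemma pr_split d (T : measurableType d) (R : realType) (P : probability T R)
  (X : nat -> T -> bool) E b n :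
  (forall t, (0 < t)%N -> measurable [set w | X t w]) -> measurable E ->
  pr P (cyl X b n `&` E) = pr P (cyl X (upd b n.+1 true) n.+1 `&` E) +
                           pr P (cyl X (upd b n.+1 false) n.+1 `&` E).
Proof.
move=> hX mE.
have m1 : measurable (cyl X (upd b n.+1 true) n.+1 `&` E).
  by apply: measurableI => //; apply: cyl_meas.
have m2 : measurable (cyl X (upd b n.+1 false) n.+1 `&` E).
  by apply: measurableI => //; apply: cyl_meas.
rewrite -prU //; last first.
  apply/seteqP; split => w //= [[h1 _] [h2 _]].
  have hn : (0 < n.+1 <= n.+1)%N by rewrite ltn0Sn leqnn.
  by move: (h1 _ hn) (h2 _ hn); rewrite /upd eqxx => ->.
congr pr; apply/seteqP; split => w /=.
  move=> [hw hE]; case hb: (X n.+1 w); [left|right]; split => // t /andP[t0 tn];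
  rewrite /upd; case: ifP => [/eqP->//|/negbT tne]; apply: hw; lia.
case=> -[hw hE]; split => // t /andP[t0 tn]; (have ht : (0 < t <= n.+1)%N by lia);
  by rewrite (hw t ht) /upd; case: ifP => // /eqP e; exfalso; lia.
Qed.

Record Hyps (R : realType) d (T : measurableType d) (P : probability T R) (v : nat)
  (p : nat -> seq bool -> R) (delta1 delta2 : R) (r0 : nat -> bool) (X : nat -> T -> bool) : Prop :=
  { h_v : (1 <= v)%N;
    h_d2 : 0 < delta2;
    h_d12 : delta2 < delta1;
    h_d1 : delta1 < 1;
    h_p : forall (k : nat) (w : seq bool), size w = v -> last false w = true ->
          delta2 <= p k w /\ p k w <= delta1;
    h_r0 : exists i : nat, r0 i;
    h_X : forall t : nat, (0 < t)%N -> measurable [set w | X t w];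
    h_cyl : forall (b : nat -> bool) (n : nat),
      (P (cyl X b n.+1) = P (cyl X b n) * (step_prob v p r0 b n)%:E)%E }.


Lemma pr_cylS R d T P v p delta1 delta2 r0 X
  (H : @Hyps R d T P v p delta1 delta2 r0 X) b n :
  pr P (cyl X b n.+1) = pr P (cyl X b n) * step_prob v p r0 b n.
Proof.
have m1 := cyl_meas b n.+1 (h_X H); have m2 := cyl_meas b n (h_X H).
apply: EFin_inj; rewrite EFinM -(@prE _ _ _ P _ m1) -(@prE _ _ _ P _ m2).
exact: (h_cyl H).
Qed.

Lemma step_ge1 R d T P v p delta1 delta2 r0 X
  (H : @Hyps R d T P v p delta1 delta2 r0 X) (b : nat -> bool) n :
  b n.+1 = true -> delta2 <= step_prob v p r0 b n.
Proof.
move=> hb; rewrite /step_prob hb.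
have [] := h_p H (gap r0 b n) (size_lastword v r0 b n) (last_lastword b n (h_v H) (h_r0 H)).
by [].
Qed.

Lemma step_ge0' R d T P v p delta1 delta2 r0 X
  (H : @Hyps R d T P v p delta1 delta2 r0 X) (b : nat -> bool) n :
  b n.+1 = false -> 1 - delta1 <= step_prob v p r0 b n.
Proof.
move=> hb; rewrite /step_prob hb.
have [_ h] := h_p H (gap r0 b n) (size_lastword v r0 b n) (last_lastword b n (h_v H) (h_r0 H)).
by rewrite lerD2l lerN2.
Qed.

Definition NVe T v r0 (X : nat -> T -> bool) a c := evt X (fun x => NV v r0 x a c).

Lemma Det_NV v r0 a c : Det c (fun x => NV v r0 x a c).
Proof.
move=> x y h hx s s1 s2 vs; apply: (hx s s1 s2).
exact: (visit_agree (agree_sym (agree_le s2 h)) vs).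
Qed.

Lemma NVe_meas R d T P v p delta1 delta2 r0 X
  (H : @Hyps R d T P v p delta1 delta2 r0 X) a c : measurable (NVe v r0 X a c).
Proof. by apply: (evt_meas (h_X H)); apply: Det_NV. Qed.

Lemma pr_setD d (T : measurableType d) (R : realType) (P : probability T R) A B :
  measurable A -> measurable B -> B `<=` A -> pr P (A `\` B) = pr P A - pr P B.
Proof.
move=> mA mB BA; rewrite -{2}(setDKU BA) prU //; first by rewrite addrK.
- exact: measurableD.
- by rewrite setIC setDIK.
Qed.

Definition qq (R : realType) v (delta1 delta2 : R) := (1 - delta1) ^+ v.-1 * delta2.

Lemma first_block R d T P v p delta1 delta2 r0 X
  (H : @Hyps R d T P v p delta1 delta2 r0 X) a b :
  pr P (cyl X b a `&` NVe v r0 X a (a + v)) <= (1 - qq v delta1 delta2) * pr P (cyl X b a).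
Proof.
have hv := h_v H; have hX := h_X H.
set bs := fun t => if (t <= a)%N then b t else (t == a + v)%N.
have d1 : 0 <= 1 - delta1 by have := h_d1 H; lra.
have S1 : forall i, (i < v)%N -> (1 - delta1) ^+ i * pr P (cyl X b a) <= pr P (cyl X bs (a + i)).
  elim=> [|i IH] hi.
    rewrite expr0 mul1r addn0 (@cyl_ext _ _ b bs) // => t /andP[_ ht].
    by rewrite /bs ht.
  rewrite addnS (pr_cylS H) exprSr mulrAC.
  apply: ler_pM.
  - by apply: mulr_ge0 => //; [exact: exprn_ge0 | exact: pr_ge0].
  - exact: d1.
  - by apply: IH; lia.
  - apply: (step_ge0' H); rewrite /bs; case: ifP => [|_]; first lia.
    by apply/negbTE; rewrite neq_ltn; apply/orP; left; lia.
have S2 : qq v delta1 delta2 * pr P (cyl X b a) <= pr P (cyl X bs (a + v)).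
  have [v' ev] : exists v', v = v'.+1 by exists v.-1; lia.
  rewrite /qq {1}ev /= {1}ev addnS (pr_cylS H) mulrAC.
  apply: ler_pM.
  - by apply: mulr_ge0 => //; [exact: exprn_ge0 | exact: pr_ge0].
  - exact: ltW (h_d2 H).
  - by apply: S1; lia.
  - by apply: (step_ge1 H); rewrite /bs; case: ifP => [|_]; [lia | rewrite ev addnS eqxx].
have S4 : cyl X bs (a + v) `<=` cyl X b a.
  move=> w hw t /andP[t0 ta]; rewrite hw; first by rewrite /bs ta.
  by rewrite t0 /=; lia.
have S3 : cyl X b a `&` NVe v r0 X a (a + v) `<=` cyl X b a `\` cyl X bs (a + v).
  move=> w [hw hnv]; split => // hw'; apply: (hnv (a + v)%N) => //; first lia.
  apply: (visit_agree (x := bs)).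
    by move=> t ht; rewrite /path (hw' t ht).
  apply: visit_block => //; first by rewrite /bs; case: ifP; [lia | rewrite eqxx].
  by move=> t ht; rewrite /bs; case: ifP => [|_]; [lia | apply/negbTE; rewrite neq_ltn; apply/orP; left; lia].
have mc := cyl_meas b a hX; have mcs := cyl_meas bs (a + v) hX.
apply: (le_trans (pr_le P _ _ S3)).
- by apply: measurableI => //; exact: NVe_meas H _ _.
- exact: measurableD.
rewrite pr_setD //; lra.
Qed.

Lemma BL1 R d T P v p delta1 delta2 r0 X
  (H : @Hyps R d T P v p delta1 delta2 r0 X) E F K n :
  measurable E -> measurable F ->
  (forall b, pr P (cyl X b n.+1 `&` E) <= K * pr P (cyl X b n.+1 `&` F)) ->
  forall b, pr P (cyl X b n `&` E) <= K * pr P (cyl X b n `&` F).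
Proof.
move=> mE mF h b; rewrite (pr_split P b n (h_X H) mE) (pr_split P b n (h_X H) mF).
by rewrite mulrDr; apply: lerD.
Qed.

Lemma BL R d T P v p delta1 delta2 r0 X
  (H : @Hyps R d T P v p delta1 delta2 r0 X) E F K j :
  measurable E -> measurable F -> forall n,
  (forall b, pr P (cyl X b (n + j) `&` E) <= K * pr P (cyl X b (n + j) `&` F)) ->
  forall b, pr P (cyl X b n `&` E) <= K * pr P (cyl X b n `&` F).
Proof.
move=> mE mF; elim: j => [|j IH] n h; first by move: h; rewrite addn0.
apply: (BL1 H mE mF); apply: IH; by rewrite addSnnS.
Qed.

Definition rr (R : realType) v (delta1 delta2 : R) := 1 - qq v delta1 delta2.

Lemma qq_bounds R d T P v p delta1 delta2 r0 X
  (H : @Hyps R d T P v p delta1 delta2 r0 X) :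
  0 < qq v delta1 delta2 /\ qq v delta1 delta2 < 1.
Proof.
have d2 := h_d2 H; have d12 := h_d12 H; have d1 := h_d1 H.
have e1 : 0 < (1 - delta1) ^+ v.-1 by apply: exprn_gt0; lra.
have e2 : (1 - delta1) ^+ v.-1 <= 1 by apply: exprn_ile1; lra.
rewrite /qq; split; first exact: mulr_gt0.
by apply: (le_lt_trans (ler_piMl _ e2)); lra.
Qed.

Lemma FL R d T P v p delta1 delta2 r0 X
  (H : @Hyps R d T P v p delta1 delta2 r0 X) m : forall a b,
  pr P (cyl X b a `&` NVe v r0 X a (a + m * v)) <= (rr v delta1 delta2) ^+ m * pr P (cyl X b a).
Proof.
have hX := h_X H; have [q0 q1] := qq_bounds H.
have r0' : 0 <= rr v delta1 delta2 by rewrite /rr; lra.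
elim: m => [|m IH] a b.
  rewrite mul0n addn0 expr0 mul1r (@cyl_capT _ _ a) //; first exact: Det_NV.
  by move=> s s1 s2; exfalso; lia.
have mE := NVe_meas H a (a + m.+1 * v); have mF := NVe_meas H a (a + v).
have step := @BL _ _ _ _ _ _ _ _ _ _ H _ _ (rr v delta1 delta2 ^+ m) v mE mF a.
apply: (le_trans (step _ b)).
  move=> b'; case: (boolp.pselect (NV v r0 b' a (a + v))) => hb.
    rewrite (@cyl_capT _ _ (a + v) _ b' (@Det_NV v r0 a (a + v)) hb).
    have -> : cyl X b' (a + v) `&` NVe v r0 X a (a + m.+1 * v) =
              cyl X b' (a + v) `&` NVe v r0 X (a + v) (a + v + m * v).
      apply/seteqP; split => w [hw hn]; split => //.
        move=> s s1 s2; apply: hn; lia; lia.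
      have hw' : NV v r0 (path X w) a (a + v).
        by apply: (@Det_NV v r0 a (a + v) b' (path X w) _ hb) => t ht; rewrite /path (hw t ht).
      move=> s s1 s2; case: (leqP s (a + v)) => hs; first exact: hw'.
      apply: hn => //; lia.
    exact: IH.
  have -> : cyl X b' (a + v) `&` NVe v r0 X a (a + m.+1 * v) = set0.
    apply/seteqP; split => w //= [hw hn]; apply: hb.
    apply: (@Det_NV v r0 a (a + v) (path X w) b') => [t ht|]; first by rewrite /path (hw t ht).
    move=> s s1 s2; apply: hn => //; lia.
  by rewrite (@cyl_cap0 _ _ (a + v) _ b' (@Det_NV v r0 a (a + v)) hb) pr0 mulr0.
rewrite exprSr -mulrA; apply: ler_wpM2l; first exact: exprn_ge0.
exact: (first_block H a b).
Qed.

Lemma SL R d T P v p delta1 delta2 r0 X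
  (H : @Hyps R d T P v p delta1 delta2 r0 X) a Q m : Det a Q ->
  pr P (evt X Q `&` NVe v r0 X a (a + m * v)) <= (rr v delta1 delta2) ^+ m * pr P (evt X Q).
Proof.
move=> hD.
have mQ := evt_meas (h_X H) hD; have mN := NVe_meas H a (a + m * v).
have step := @BL _ _ _ _ _ _ _ _ _ _ H _ _ (rr v delta1 delta2 ^+ m) a (measurableI _ _ mQ mN) mQ 0.
rewrite add0n in step.
suff hyp : forall b, pr P (cyl X b a `&` (evt X Q `&` NVe v r0 X a (a + m * v))) <=
    rr v delta1 delta2 ^+ m * pr P (cyl X b a `&` evt X Q).
  by have := step hyp (fun=> false); rewrite !cyl0 !setTI => h; exact: h.
move=> b; case: (boolp.pselect (Q b)) => qb.
  rewrite setIA (cyl_capT _ hD qb); exact: (FL H m a b).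
by rewrite setIA (cyl_cap0 _ hD qb) set0I pr0 mulr0.
Qed.

Definition Sev T v r0 (X : nat -> T -> bool) j a := evt X (fun x => Tsum v r0 x j = Some a).
Definition Nev T v r0 (X : nat -> T -> bool) j := evt X (fun x => Tsum v r0 x j = None).
Definition NVinf T v r0 (X : nat -> T -> bool) a :=
  evt X (fun x => forall s, (a < s)%N -> ~ visit v r0 x s).

Lemma Det_S v r0 j a : Det a (fun x => Tsum v r0 x j = Some a).
Proof. by move=> x y h hx; exact: Tsum_agree hx h. Qed.

Lemma Sev_meas R d T P v p delta1 delta2 r0 X
  (H : @Hyps R d T P v p delta1 delta2 r0 X) j a : measurable (Sev v r0 X j a).
Proof. by apply: (evt_meas (h_X H)); apply: Det_S. Qed.

Lemma Nev_meas R d T P v p delta1 delta2 r0 X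
  (H : @Hyps R d T P v p delta1 delta2 r0 X) j : measurable (Nev v r0 X j).
Proof.
have -> : Nev v r0 X j = ~` \bigcup_a Sev v r0 X j a.
  apply/seteqP; split => w /=.
    by move=> hN [a _ hS]; move: hS; rewrite /Sev /evt /= hN.
  move=> h; rewrite /Nev /evt /=; case E: (Tsum v r0 (path X w) j) => [a|] //.
  by exfalso; apply: h; exists a.
apply: measurableC; apply: bigcupT_measurable => a; exact: Sev_meas H j a.
Qed.

Lemma NVinf_meas R d T P v p delta1 delta2 r0 X
  (H : @Hyps R d T P v p delta1 delta2 r0 X) a : measurable (NVinf v r0 X a).
Proof.
have -> : NVinf v r0 X a = \bigcap_s evt X (fun x => (a < s)%N -> ~ visit v r0 x s).
  apply/seteqP; split => w /=.
    by move=> h s _; apply: h.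
  by move=> h s; apply: (h s).
apply: bigcapT_measurable => s; apply: (evt_meas (h_X H) (N := s)).
move=> x y h hx sa vs; apply: (hx sa); exact: (visit_agree (agree_sym h) vs).
Qed.

Lemma lim_le0 (R : realType) (r x : R) : 0 <= r < 1 -> (forall m, x <= r ^+ m) -> x <= 0.
Proof.
move=> /andP[r0 r1] h.
have hr : `|r| < 1 by rewrite ger0_norm.
have c := cvg_expr hr.
have : x <= limn (GRing.exp r : R ^nat).
  apply: limr_ge; first exact: (cvgP _ c).
  by near=> n; apply: h.
by rewrite (cvg_lim _ c).
Unshelve. all: by end_near.
Qed.

Lemma prU2 d (T : measurableType d) (R : realType) (P : probability T R) A B :
  measurable A -> measurable B -> pr P (A `|` B) <= pr P A + pr P B.
Proof.
move=> mA mB; have h := measureU2 P mA mB.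
have mAB : measurable (A `|` B) by exact: measurableU.
rewrite -lee_fin EFinD -(@prE _ _ _ P A mA) -(@prE _ _ _ P B mB) -(@prE _ _ _ P _ mAB).
exact: h.
Qed.

Lemma rr_bounds R d T P v p delta1 delta2 r0 X
  (H : @Hyps R d T P v p delta1 delta2 r0 X) :
  0 < rr v delta1 delta2 /\ rr v delta1 delta2 < 1.
Proof. by have [q0 q1] := qq_bounds H; rewrite /rr; split; lra. Qed.

Lemma null_S R d T P v p delta1 delta2 r0 X
  (H : @Hyps R d T P v p delta1 delta2 r0 X) j a :
  pr P (Sev v r0 X j a `&` NVinf v r0 X a) = 0.
Proof.
apply/eqP; rewrite eq_le pr_ge0 andbT.
have [r0' r1] := rr_bounds H.
apply: (@lim_le0 _ (rr v delta1 delta2)); first by rewrite r1 ltW.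
move=> m; have mS := Sev_meas H j a.
apply: (le_trans (y := pr P (Sev v r0 X j a `&` NVe v r0 X a (a + m * v)))).
  apply: pr_le.
  - by apply: measurableI => //; exact: NVinf_meas H a.
  - by apply: measurableI => //; exact: NVe_meas H _ _.
  by move=> w [h1 h2]; split => // s s1 _; apply: h2.
apply: (le_trans (SL H m (@Det_S v r0 j a))).
rewrite -[X in _ <= X]mulr1; apply: ler_wpM2l; first exact: exprn_ge0 (ltW r0').
exact: pr_le1.
Qed.

Lemma triv_S T v r0 (X : nat -> T -> bool) j (F : nat -> set T) :
  (forall a, F a `<=` Sev v r0 X j a) -> trivIset setT F.
Proof.
move=> hF i i' _ _ [w [h1 h2]].
have := hF i w h1; have := hF i' w h2; rewrite /Sev /evt /= => ->; by case.
Qed.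

Lemma Nnull R d T P v p delta1 delta2 r0 X
  (H : @Hyps R d T P v p delta1 delta2 r0 X) j : pr P (Nev v r0 X j) = 0.
Proof.
elim: j => [|j IH].
  have -> : Nev v r0 X 0 = set0 by apply/seteqP; split => w.
  exact: pr0.
have -> : Nev v r0 X j.+1 = Nev v r0 X j `|` \bigcup_a (Sev v r0 X j a `&` NVinf v r0 X a).
  have key : forall x, Tsum v r0 x j.+1 = None <-> Tsum v r0 x j = None \/
      exists a, Tsum v r0 x j = Some a /\ (forall s, (a < s)%N -> ~ visit v r0 x s).
    move=> x; rewrite Tsum_S; split.
      case E: (Tsum v r0 x j) => [a|] /=; last by left.
      move=> hn; right; exists a; split => // s hs.
      exact: nextvisit_None hn s hs.
    case=> [->//|[a [hS hinf]]]; rewrite hS /=.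
    case hn: (nextvisit v r0 x a) => [b|] //.
    have [h1 h2 _] := nextvisit_Some hn; by exfalso; apply: (hinf b).
  apply/seteqP; split => w.
    move=> h; case: (proj1 (key (path X w)) h) => [h'|[a [h1 h2]]].
      by left.
    by right; exists a.
  move=> h; apply: (proj2 (key (path X w))); case: h => [h|[a _ [h1 h2]]].
    by left.
  by right; exists a.
have mG : forall a, measurable (Sev v r0 X j a `&` NVinf v r0 X a).
  by move=> a; apply: measurableI; [exact: Sev_meas H j a | exact: NVinf_meas H a].
have mU : measurable (\bigcup_a (Sev v r0 X j a `&` NVinf v r0 X a)).
  exact: bigcupT_measurable.
have hU : pr P (\bigcup_a (Sev v r0 X j a `&` NVinf v r0 X a)) = 0.
  have ht : trivIset setT (fun a => Sev v r0 X j a `&` NVinf v r0 X a).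
    by apply: (@triv_S _ v r0 X j) => a w [].
  apply: EFin_inj; rewrite -(@prE _ _ _ P _ mU) (measure_bigcup P setT _ (fun i _ => mG i) ht).
  apply: eseries0 => i _ _; have := @prE _ _ _ P _ (mG i); rewrite (null_S H) => e; exact: e.
apply/eqP; rewrite eq_le pr_ge0 andbT.
apply: (le_trans (prU2 P (Nev_meas H j) mU)); by rewrite IH hU addr0.
Qed.

Lemma tau_event_eq T v r0 (X : nat -> T -> bool) j n :
  tau_ge_event v r0 X j.+1 n =
  Nev v r0 X j `|` \bigcup_a (Sev v r0 X j a `&` NVe v r0 X a (a + n.-1)).
Proof.
apply/seteqP; split => w.
  move=> h; case: (proj1 (tau_char v r0 (path X w) j n) h) => [h'|[a [h1 h2]]].
    by left.
  by right; exists a.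
move=> h; apply: (proj2 (tau_char v r0 (path X w) j n)); case: h => [h|[a _ [h1 h2]]].
  by left.
by right; exists a.
Qed.

Lemma tau_bound R d T P v p delta1 delta2 r0 X
  (H : @Hyps R d T P v p delta1 delta2 r0 X) j n :
  (P (tau_ge_event v r0 X j.+1 n) <= ((rr v delta1 delta2) ^+ (n.-1 %/ v))%:E)%E.
Proof.
set m := (n.-1 %/ v)%N; set K := rr v delta1 delta2 ^+ m.
have [r0' r1] := rr_bounds H.
have K0 : 0 <= K by apply: exprn_ge0; exact: ltW.
have mG : forall a, measurable (Sev v r0 X j a `&` NVe v r0 X a (a + n.-1)).
  by move=> a; apply: measurableI; [exact: Sev_meas H j a | exact: NVe_meas H _ _].
have mU : measurable (\bigcup_a (Sev v r0 X j a `&` NVe v r0 X a (a + n.-1))).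
  exact: bigcupT_measurable.
have mN := Nev_meas H j.
have mNU : measurable (Nev v r0 X j `|` \bigcup_a (Sev v r0 X j a `&` NVe v r0 X a (a + n.-1))).
  exact: measurableU.
rewrite tau_event_eq (@prE _ _ _ P _ mNU) lee_fin.
apply: (le_trans (prU2 P mN mU)); rewrite (Nnull H) add0r.
rewrite -lee_fin -(@prE _ _ _ P _ mU).
have ht : trivIset setT (fun a => Sev v r0 X j a `&` NVe v r0 X a (a + n.-1)).
  by apply: (@triv_S _ v r0 X j) => a w [].
rewrite (measure_bigcup P setT _ (fun i _ => mG i) ht).
have hS : forall a, (P (Sev v r0 X j a `&` NVe v r0 X a (a + n.-1)) <= K%:E * P (Sev v r0 X j a))%E.
  move=> a; rewrite (@prE _ _ _ P _ (mG a)) (@prE _ _ _ P _ (Sev_meas H j a)) -EFinM lee_fin.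
  apply: (le_trans (y := pr P (Sev v r0 X j a `&` NVe v r0 X a (a + m * v)))).
    apply: pr_le => //; first by apply: measurableI; [exact: Sev_meas H j a | exact: NVe_meas H _ _].
    move=> w [h1 h2]; split => // s s1 s2; apply: h2 => //.
    have := leq_trunc_div n.-1 v; rewrite -/m; lia.
  exact: (SL H m (@Det_S v r0 j a)).
apply: (le_trans (lee_nneseries _ (fun a _ => hS a))).
  by move=> i _ _; exact: measure_ge0.
rewrite nneseriesZl; last by move=> i _; exact: measure_ge0.
have htS : trivIset setT (fun a => Sev v r0 X j a).
  by apply: (@triv_S _ v r0 X j) => a w.
rewrite -(measure_bigcup P setT _ (fun i _ => Sev_meas H j i) htS).
have mS : measurable (\bigcup_a Sev v r0 X j a).
  by apply: bigcupT_measurable => a; exact: Sev_meas H j a.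
have e := @prE _ _ _ P _ mS.
apply: (le_trans (y := (K * pr P (\bigcup_a Sev v r0 X j a))%:E)).
  by rewrite EFinM -e; exact: le_refl.
rewrite lee_fin.
rewrite -[X in _ <= X]mulr1; apply: ler_wpM2l => //; exact: pr_le1.
Qed.

Lemma final_ineq (R : realType) (r : R) (v n : nat) : 0 < r < 1 -> (1 <= v)%N ->
  r ^+ (n.-1 %/ v) <= r^-1 * expR (- (ln (r^-1) / v%:R * n%:R)).
Proof.
move=> /andP[r0 r1] hv.
set m := (n.-1 %/ v)%N.
have rpos : r \is Num.pos by rewrite posrE.
have ripos : r^-1 \is Num.pos by rewrite posrE invr_gt0.
set L := ln (r^-1).
have L0 : 0 <= L.
  by apply: ln_ge0; rewrite invr_ge1 //; [exact: ltW | rewrite unitfE gt_eqF].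
have lr : ln r = - L by rewrite /L lnV // opprK.
have e1 : r ^+ m = expR (m%:R * (- L)) by rewrite expRM_natl -lr lnK.
have e2 : r^-1 = expR L by rewrite /L lnK.
rewrite e1 {1}e2 -expRD ler_expR.
have hn : (n <= m.+1 * v)%N.
  have := ltn_ceil n.-1 hv; rewrite -/m; lia.
have vpos : 0 < v%:R :> R by rewrite ltr0n.
have h1 : n%:R / v%:R <= m%:R + 1 :> R.
  rewrite ler_pdivrMr // natr1 -natrM ler_nat; lia.
have h2 : L * (n%:R / v%:R) <= L * (m%:R + 1) by apply: ler_wpM2l.
have e : L / v%:R * n%:R = L * (n%:R / v%:R) by rewrite mulrAC mulrA.
rewrite e; lra.
Qed.

Theorem lemma4p1 (R : realType) (d : measure_display) (T : measurableType d)
  (P : probability T R)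
  (v : nat) (p : nat -> seq bool -> R) (delta1 delta2 : R)
  (r0 : nat -> bool) (X : nat -> T -> bool) :
  (1 <= v)%N ->
  0 < delta2 -> delta2 < delta1 -> delta1 < 1 ->
  (forall (k : nat) (w : seq bool), size w = v -> last false w = true ->
     delta2 <= p k w /\ p k w <= delta1) ->
  (exists i : nat, r0 i) ->
  (forall t : nat, (0 < t)%N -> measurable [set w | X t w]) ->
  (forall (b : nat -> bool) (n : nat),
     (P (cyl X b n.+1) = P (cyl X b n) * (step_prob v p r0 b n)%:E)%E) ->
  forall k n : nat, (1 <= k)%N ->
    let C := (1 - (1 - delta1) ^+ v.-1 * delta2)^-1 in
    let rho := ln C / v%:R in
    (P (tau_ge_event v r0 X k n) <= (C * expR (- (rho * n%:R)))%:E)%E.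
Proof.
move=> hv hd2 hd12 hd1 hp hr0 hX hcyl k n hk.
have H : Hyps P v p delta1 delta2 r0 X by split.
case: k hk => [//|j] _.
apply: (le_trans (tau_bound H j n)); rewrite lee_fin.
have [r0' r1] := rr_bounds H.
apply: final_ineq => //; by rewrite r0' r1.
Qed.
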